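(* Let $k \ge 2$ be an integer. Let $V_0 = \{0\}$, $V_n = \{1,\dots,k\}^n$ for $n \in \mathbb{N}$, and $V = \bigcup_{n \ge 0} V_n$. Define $\pi \colon V \to V \cup \{-1\}$ by $\pi(0) = -1$, $\pi(v) = 0$ for $v \in V_1$, and $\pi(v_1,\dots,v_n) = (v_1,\dots,v_{n-1})$ for $n \ge 2$. Let $G_k$ be the graph with vertex set $V$ whose edges are the pairs $\{v,v'\} \subset V$ with $\pi(v) = v'$ or $\pi(v') = v$ (the infinite rooted $k$-ary tree). Then $\chi_{\star,1}(G_k) = 2$ and $\chi_{\star,2}(G_k) = k+1$.
   Context: Let $G$ be a graph with vertex set $V$, with the graph (shortest path) distance, and let $n, m \in \mathbb{N}$. A function $f \colon V \to \{1,\dots,n\}$ is an $m$-distance clustered $n$-coloring of $G$ if there is a constant $K_\star > 0$ such that for every $i$, every connected component of the subgraph induced by $f^{-1}[\{i\}]$ has at most $K_\star$ vertices, and the distance in $G$ between any two distinct such components (of the same color $i$) is bigger than $m$. The $m$-distance clustered chromatic number $\chi_{\star,m}(G)$ is the least $n \in \mathbb{N}$ for which an $m$-distance clustered $n$-coloring of $G$ exists, and $\infty$ if none exists. *)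

(* Defs.v *)
From mathcomp Require Import all_boot.
Set Implicit Arguments. Unset Strict Implicit. Unset Printing Implicit Defensive.

Section Clustered.
Variable T : eqType.
Variable adj : rel T.

Definition dist_le (m : nat) (x y : T) : Prop :=
  exists p : seq T, [/\ path adj x p, last x p = y & size p <= m].

(* y lies in the connected component of x in the subgraph induced by the
   colour class f^{-1}[{f x}] : a walk from x to y all of whose vertices have
   colour f x. *)
Definition mono_conn (n : nat) (f : T -> 'I_n) (x y : T) : Prop :=
  exists p : seq T,
    [/\ path (fun a b => adj a b && (f b == f x)) x p & last x p = y].

Definition comp_card_le (n : nat) (f : T -> 'I_n) (x : T) (K : nat) : Prop :=
  forall s : seq T, uniq s -> (forall y, y \in s -> mono_conn f x y) ->
    size s <= K.

Definition dist_clustered_coloring (m n : nat) (f : T -> 'I_n) : Prop :=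
  exists K : nat, 0 < K /\
    (forall x : T, comp_card_le f x K) /\
    (forall x y : T, f x = f y -> ~ mono_conn f x y ->
       forall a b : T, mono_conn f x a -> mono_conn f y b -> ~ dist_le m a b).

Definition dist_clustered_colorable (m n : nat) : Prop :=
  exists f : T -> 'I_n, @dist_clustered_coloring m n f.

(* chi_{*,m}(G) = c, where c = Some n means the finite value n and None means
   infinity: n is the least natural number admitting such a colouring. *)
Definition is_dist_clustered_chi (m : nat) (c : option nat) : Prop :=
  match c with
  | Some n => dist_clustered_colorable m n /\
              (forall n', n' < n -> ~ dist_clustered_colorable m n')
  | None => forall n, ~ dist_clustered_colorable m n
  end.
End Clustered.

(* The infinite rooted k-ary tree G_k.  A vertex (v_1,...,v_n) in
   {1..k}^n is represented by a sequence of length n over 'I_k (label i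
   stands for i+1); the root 0 (V_0) is the empty sequence. *)
Definition kary_vertex (k : nat) := seq 'I_k.

(* pi(v) = v' for v not the root: drop the last coordinate
   (for v in V_1 this gives the root [::]). pi(root) = -1 is not a vertex. *)
Definition kary_parent_is (k : nat) (v v' : kary_vertex k) : bool :=
  (v != [::]) && (v' == take (size v).-1 v).

Definition kary_adj (k : nat) : rel (kary_vertex k) :=
  fun v v' => kary_parent_is v v' || kary_parent_is v' v.

(* Main.v *)
Require Import Defs.
From mathcomp Require Import all_boot.
From Stdlib Require Import Classical.
Set Implicit Arguments. Unset Strict Implicit.

Section K.
Variable k : nat.
Notation V := (kary_vertex k).

Lemma parent_rcons (v : V) i : kary_parent_is (rcons v i) v.
Proof.
rewrite /kary_parent_is; apply/andP; split; first by case: v.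
by rewrite size_rcons /= -cats1 take_size_cat.
Qed.

Lemma parent_inv (v v' : V) : kary_parent_is v v' -> exists i, v = rcons v' i.
Proof.
rewrite /kary_vertex in v *; case/lastP: v => [|p x]; first by [].
case/andP=> _ /eqP ->; exists x.
by rewrite size_rcons /= -[in take _ _]cats1 take_size_cat.
Qed.

Lemma adjP (a b : V) : kary_adj a b ->
  (exists i, a = rcons b i) \/ (exists i, b = rcons a i).
Proof. by case/orP=> /parent_inv; [left|right]. Qed.

Lemma adj_child (v : V) i : kary_adj v (rcons v i).
Proof. by rewrite /kary_adj parent_rcons orbT. Qed.
Lemma adj_parent (v : V) i : kary_adj (rcons v i) v.
Proof. by rewrite /kary_adj parent_rcons. Qed.

Lemma take_rc (w : V) j n : n <= size w -> take n (rcons w j) = take n w.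
Proof. by move=> h; rewrite -cats1 takel_cat. Qed.

Lemma shape (v : V) : ~~ odd (size v) \/
  exists p i, v = rcons p i /\ ~~ odd (size p).
Proof.
rewrite /kary_vertex in v *; case/lastP: v => [|p x]; first by left.
rewrite size_rcons /=; case h: (odd (size p)); [by left | right].
by exists p, x; rewrite h.
Qed.

Fixpoint col_aux (c : 'I_k.+1) (s : V) : 'I_k.+1 :=
  match s with a :: ((b :: t) as t') => col_aux (lift c b) t | _ => c end.

Lemma col_cat c (s t : V) : ~~ odd (size s) ->
  col_aux c (s ++ t) = col_aux (col_aux c s) t.
Proof.
have [n hn] : exists n, size s <= n by exists (size s).
elim: n s c hn => [|n IH] [|a [|b s]] c //= hn hs.
rewrite IH //; first by move: hn; rewrite ltnS; apply: leq_trans.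
by move: hs; rewrite negbK.
Qed.

Definition fc (v : V) := col_aux ord0 v.

Lemma fE1 (v : V) i : ~~ odd (size v) -> fc (rcons v i) = fc v.
Proof. by move=> h; rewrite /fc -cats1 col_cat. Qed.

Lemma fE2 (v : V) i j : ~~ odd (size v) ->
  fc (rcons (rcons v i) j) = lift (fc v) j.
Proof. by move=> h; rewrite /fc -!cats1 -catA col_cat. Qed.

Definition rep (v : V) : V := if odd (size v) then take (size v).-1 v else v.

Lemma rep_even (v : V) : ~~ odd (size v) -> rep v = v.
Proof. by rewrite /rep => /negbTE ->. Qed.

Lemma rep_odd (p : V) i : ~~ odd (size p) -> rep (rcons p i) = p.
Proof.
move=> h; rewrite /rep size_rcons /= h /= -cats1 take_size_cat //.
Qed.

Lemma rep_is_even (v : V) : ~~ odd (size (rep v)).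
Proof.
case: (shape v) => [h|[p [i [-> h]]]]; first by rewrite rep_even.
by rewrite rep_odd.
Qed.

Lemma grand_contra (b : V) j i : fc (rcons (rcons b j) i) <> fc b.
Proof.
case: (shape b) => [h|[p [l [-> h]]]].
  by rewrite fE2 // => /eqP; rewrite eq_sym (negbTE (neq_lift _ _)).
rewrite fE1; last by rewrite !size_rcons /= negbK.
by rewrite fE2 // fE1 // => /eqP; rewrite eq_sym (negbTE (neq_lift _ _)).
Qed.

Lemma adj_rep_par (a b : V) i : a = rcons b i -> fc a = fc b -> rep a = rep b.
Proof.
move=> ->; case: (shape b) => [h|[p [l [-> h]]]].
  by rewrite rep_odd // rep_even.
by rewrite fE2 // fE1 // => /eqP; rewrite eq_sym (negbTE (neq_lift _ _)).
Qed.

Lemma adj_rep (a b : V) : kary_adj a b -> fc a = fc b -> rep a = rep b.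
Proof.
case/adjP=> [[i h]|[i h]] e; first exact: adj_rep_par h e.
by apply/esym; apply: adj_rep_par h (esym e).
Qed.

Lemma mono_rep (x y : V) : mono_conn (@kary_adj k) fc x y ->
  rep y = rep x /\ fc y = fc x.
Proof.
case=> p [hp <-].
suff: forall z, fc z = fc x ->
  path (fun a b => kary_adj a b && (fc b == fc x)) z p ->
  rep (last z p) = rep z /\ fc (last z p) = fc x by apply.
elim: p {hp} => [|c p IH] z hz //=.
case/andP=> /andP [hadj /eqP hc] hp.
have [IH1 IH2] := IH c hc hp; split => //.
by rewrite IH1; apply/esym/adj_rep; rewrite // hz hc.
Qed.

Lemma rep_mono (x y : V) : rep x = rep y -> mono_conn (@kary_adj k) fc x y.
Proof.
case: (shape x) => [hx|[p [i [-> hx]]]]; case: (shape y) => [hy|[q [j [-> hy]]]].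
- rewrite !rep_even // => ->; by exists [::].
- rewrite (rep_even hx) (rep_odd _ hy) => ->; exists [:: rcons q j] => /=.
  by rewrite adj_child fE1 // eqxx.
- rewrite (rep_even hy) (rep_odd _ hx) => <-; exists [:: p] => /=.
  by rewrite adj_parent fE1 // eqxx.
- rewrite !rep_odd // => <-; exists [:: p; rcons p j] => /=.
  by rewrite adj_parent adj_child !fE1 // eqxx.
Qed.

Lemma dist2_rep (a b : V) : dist_le (@kary_adj k) 2 a b -> fc a = fc b -> rep a = rep b.
Proof.
case=> [[|c [|d [|e p]]]] [hp hl hs] //=.
- by move: hl => /= ->.
- move: hp hl => /= /andP [h _] <-; exact: adj_rep.
move: hp hl => /= /and3P [h1 h2 _] <- {hs} e.
case/adjP: h1 => [[i ha]|[i hca]]; case/adjP: h2 => [[j hc]|[j hd]].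
- by exfalso; apply: (@grand_contra d j i); rewrite -hc -ha.
- subst; move: e; case: (shape c) => [h|[p [l [-> h]]]]; first by rewrite !rep_odd.
  rewrite !fE2 // => /lift_inj ->; done.
- by rewrite hca in hc; case/rcons_inj: hc => ->.
- by exfalso; apply: (@grand_contra a i j); rewrite -hca -hd.
Qed.

Lemma col2 : dist_clustered_coloring (@kary_adj k) 2 fc.
Proof.
exists k.+1; split => //; split.
  move=> x s us hs.
  have -> : k.+1 = size (rep x :: [seq rcons (rep x) i | i <- enum 'I_k]).
    by rewrite /= size_map size_enum_ord.
  apply: uniq_leq_size => // y /hs /mono_rep [hy _].
  case: (shape y) hy => [h|[p [i [-> h]]]].
    by rewrite rep_even // => ->; rewrite mem_head.
  rewrite rep_odd // => ->; rewrite inE; apply/orP; right.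
  by apply/mapP; exists i; rewrite ?mem_enum.
move=> x y hxy nc a b /mono_rep [ha fa] /mono_rep [hb fb] hd.
apply: nc; apply: rep_mono; rewrite -ha -hb; apply: dist2_rep hd _.
by rewrite fa fb.
Qed.

Section Lower.
Variable n : nat.
Variable f : V -> 'I_n.

Lemma inf_path K : (forall v : V, exists i, f (rcons v i) = f v) ->
  ~ comp_card_le (@kary_adj k) f [::] K.
Proof.
move=> hch hK.
pose nxt (v : V) : V :=
  if [pick i | f (rcons v i) == f v] is Some i then rcons v i else v.
have hn : forall v, exists i, nxt v = rcons v i /\ f (nxt v) = f v.
  move=> v; rewrite /nxt; case: pickP => [i /eqP hi|h]; first by exists i.
  by have [i hi] := hch v; move: (h i); rewrite hi eqxx.
pose g m := iter m nxt [::].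
have sg : forall m, size (g m) = m.
  elim=> [|m IH] //=; have [i [-> _]] := hn (g m); by rewrite size_rcons IH.
have fg : forall m, f (g m) = f [::].
  elim=> [|m IH] //=; have [i [_ ->]] := hn (g m); by rewrite IH.
have mg : forall m, mono_conn (@kary_adj k) f [::] (g m).
  elim=> [|m [p [hp hl]]]; first by exists [::].
  exists (rcons p (g m.+1)); split; last by rewrite last_rcons.
  rewrite rcons_path hp hl (fg m.+1) eqxx andbT /=.
  by have [i [-> _]] := hn (g m); rewrite adj_child.
have := hK [seq g m | m <- iota 0 K.+1].
rewrite size_map size_iota ltnn => H; suff: false by []; apply: H.
  apply: (@map_uniq _ _ size); rewrite -map_comp (eq_map sg) map_id iota_uniq //.
  by move=> y /mapP [m _ ->].
Qed.
End Lower.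

Lemma subtree_stay n (g : V -> 'I_n) (v : V) i col : g v != col ->
  forall (z : V) p, take (size (rcons v i)) z = rcons v i ->
  path (fun a b => kary_adj a b && (g b == col)) z p ->
  take (size (rcons v i)) (last z p) = rcons v i.
Proof.
set c := rcons v i => hv z p; elim: p z => [|w p IH] z //= hz /andP [/andP [hadj hw] hp].
apply: IH hp.
have szc : size c <= size z.
  by rewrite -{1}hz size_take; case: ifP => // /ltnW.
case/adjP: hadj => [[j hzw]|[j ->]]; last by rewrite take_rc.
have : size c < size z.
  rewrite ltn_neqAle szc andbT; apply/negP => /eqP e.
  move: hz; rewrite e take_size => ezc; move: hzw; rewrite ezc /c.
  by case/rcons_inj => ewv _; move: hv; rewrite ewv (eqP hw) eqxx.
by rewrite hzw size_rcons ltnS => h; move: hz; rewrite hzw take_rc.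
Qed.

Lemma pigeon n (g : V -> 'I_n) (s : seq V) : n < size s -> uniq s ->
  exists x y, [/\ x \in s, y \in s, x != y & g x = g y].
Proof.
move=> hn us; apply: NNPP => hne.
have inj : {in s &, injective g}.
  move=> x y hx hy e; apply: NNPP => nxy.
  by apply: hne; exists x, y; split => //; apply/eqP.
have : size (map g s) <= size (enum 'I_n).
  by apply: uniq_leq_size; [rewrite map_inj_in_uniq | move=> y _; rewrite mem_enum].
by rewrite size_map size_enum_ord leqNgt hn.
Qed.

Lemma lower2 n (g : V -> 'I_n) : n < k.+1 -> ~ dist_clustered_coloring (@kary_adj k) 2 g.
Proof.
move=> hn [K [_ [hK hd]]].
apply: (inf_path (K := K)) (hK [::]) => v.
set s := v :: [seq rcons v i | i <- enum 'I_k].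
have us : uniq s.
  rewrite /s /= map_inj_uniq ?enum_uniq ?andbT; last by move=> a b /rcons_inj [].
  by apply/mapP => [[i _ /(congr1 size)]]; rewrite size_rcons => /n_Sn.
have hs : n < size s by rewrite /= size_map size_enum_ord.
have [x [y [hx hy nxy e]]] := @pigeon _ g s hs us.
have dist2 : forall i j, i != j -> g (rcons v i) = g (rcons v j) ->
  g (rcons v i) = g v.
  move=> i j nij eij; apply: NNPP => ne.
  have mc : mono_conn (@kary_adj k) g (rcons v i) (rcons v j).
    apply: NNPP => nmc; apply: (hd _ _ eij nmc (rcons v i) (rcons v j)).
    - by exists [::].
    - by exists [::].
    by exists [:: v; rcons v j]; rewrite /= adj_parent adj_child.
  case: mc => p [hp hl].
  have := @subtree_stay n g v i (g (rcons v i)) _ (rcons v i) p (take_size _) hp.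
  rewrite hl !size_rcons -(size_rcons v j) take_size => H.
  have : rcons v j = rcons v i by apply: H; rewrite eq_sym; apply/eqP.
  by case/rcons_inj => /eqP; rewrite eq_sym (negbTE nij).
move: hx hy; rewrite !inE => /orP [/eqP hx|/mapP [i _ hx]] /orP [/eqP hy|/mapP [j _ hy]]; subst.
- by rewrite eqxx in nxy.
- by exists j.
- by exists i.
- exists i; apply: (dist2 i j) => //; apply: contra nxy => /eqP ->. exact: eqxx.
Qed.

Definition par (v : V) : 'I_2 := inord (odd (size v)).

Lemma par_eq (a b : V) : par a = par b -> odd (size a) = odd (size b).
Proof.
move/(congr1 (@nat_of_ord 2)); rewrite /par !inordK ?ltnS ?leq_b1 //.
by case: (odd _); case: (odd _).
Qed.

Lemma adj_par (a b : V) : kary_adj a b -> par a <> par b.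
Proof.
move=> h /par_eq; case/adjP: h => [[i ->]|[i ->]]; rewrite size_rcons /=;
  by case: (odd _).
Qed.

Lemma mono_par (x y : V) : mono_conn (@kary_adj k) par x y -> y = x.
Proof.
case=> [[|c p] [hp <-]] //; move: hp => /= /andP [/andP [h /eqP e] _].
by case: (adj_par h).
Qed.

Lemma col1 : dist_clustered_coloring (@kary_adj k) 1 par.
Proof.
exists 1; split => //; split.
  move=> x s us hs; have -> : 1 = size [:: x] by [].
  by apply: uniq_leq_size => // y /hs /mono_par ->; rewrite mem_head.
move=> x y hxy nc a b /mono_par -> /mono_par -> [[|c [|d p]]] [hp hl hs] //.
  by apply: nc; move: hl => /= ->; exists [::].
move: hp hl => /= /andP [h _] e; subst; exact: (adj_par h).
Qed.

Lemma lower1 n (g : V -> 'I_n) : n < 2 -> 0 < k -> ~ dist_clustered_coloring (@kary_adj k) 1 g.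
Proof.
move=> hn hk [K [_ [hK _]]]; apply: (inf_path (K := K)) (hK [::]) => v.
exists (Ordinal hk); apply: val_inj.
rewrite ltnS in hn.
have h1 : forall c : 'I_n, val c = 0.
  by move=> [c hc] /=; move: (leq_trans hc hn); rewrite ltnS leqn0 => /eqP.
by rewrite !h1.
Qed.

End K.

Theorem mainTheorem8 (k : nat) (hk : 2 <= k) :
  is_dist_clustered_chi (@kary_adj k) 1 (Some 2) /\
  is_dist_clustered_chi (@kary_adj k) 2 (Some k.+1).
Proof.
split; split.
- by exists (@par k); apply: col1.
- move=> n hn [g hg]; apply: (lower1 hn _ hg); exact: ltnW.
- by exists (@fc k); apply: col2.
- move=> n hn [g hg]; exact: (lower2 hn hg).
Qed.
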